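(* Let $m\in\mathbb{N}$. If $S\subseteq\mathbb{N}^{\mathbb{N}}$ is in $\mathbf{\Delta}'_{m+2}$, then $S$ is $m$th-order guessable.
   Context: Baire space $\mathbb{N}^{\mathbb{N}}$ carries the product of discrete topologies; $\mathbf{\Sigma}^0_n,\mathbf{\Pi}^0_n,\mathbf{\Delta}^0_n$ are the boldface Borel pointclasses. Definition: $\mathbf{\Delta}'_2=\mathbf{\Delta}^0_2$; for $k>2$, $S\in\mathbf{\Delta}'_k$ iff $S$ is a countable union of countable intersections of $\mathbf{\Delta}^0_{k-2}$ sets and also a countable intersection of countable unions of $\mathbf{\Delta}^0_{k-2}$ sets. The language $\mathscr{L}_{\max}$ is the first-order language (with equality) having: a constant symbol $\overline{n}$ for each $n\in\mathbb{N}$; an $n$-ary function symbol $\tilde w$ for each $w:\mathbb{N}^n\to\mathbb{N}$; an $n$-ary predicate symbol $\tilde p$ for each $p\subseteq\mathbb{N}^n$; a special unary function symbol $\mathbf{f}$; and, for every $n$ and every $G:\mathbb{N}^n\times\mathbb{N}^{<\mathbb{N}}\to\mathbb{N}$, an $(n+1)$-ary function symbol $G\circ\mathbf{f}$. For $f\in\mathbb{N}^{\mathbb{N}}$, $\mathscr{M}_f$ is the structure with universe $\mathbb{N}$ interpreting $\overline n$ as $n$, $\tilde w$ as $w$, $\tilde p$ as $p$, $\mathbf f$ as $f$, and $G\circ\mathbf f$ as $(m_1,\dots,m_n,m)\mapsto G(m_1,\dots,m_n,f(0),\dots,f(m))$. For a sentence $\phi$, $f(\phi)=1$ if $\mathscr{M}_f\models\phi$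 and $f(\phi)=0$ otherwise. Formula classes: ''quantifier-free'' means containing no quantifiers at all (not even bounded ones). $\Sigma_0=\Pi_0=\Delta_0$ is the set of quantifier-free formulas; $\Sigma_{n+1}=\{\exists x\,\phi:\phi\in\Pi_n\}$ and $\Pi_{n+1}=\{\forall x\,\phi:\phi\in\Sigma_n\}$; a formula is $\Delta_{n+1}$ if it is equivalent, in every structure $\mathscr{M}_f$ ($f\in\mathbb{N}^{\mathbb{N}}$), to some $\Sigma_{n+1}$ formula of $\mathscr{L}_{\max}$ and also to some $\Pi_{n+1}$ formula of $\mathscr{L}_{\max}$. For a set $\Sigma$ of symbols of $\mathscr{L}_{\max}$, a sentence ''of $\mathscr{L}_{\max}\cap\Sigma$'' is an $\mathscr{L}_{\max}$-sentence all of whose non-logical symbols lie in $\Sigma$. Definition ($m$th-order guessable): $S\subseteq\mathbb{N}^{\mathbb{N}}$ is $m$th-order guessable if there exist a countable set $\Sigma$ of $\mathscr{L}_{\max}$-symbols, a listing $\phi_0,\phi_1,\dots$ of all $\Delta_m$ sentences of $\mathscr{L}_{\max}\cap\Sigma$, and a function $G:\{0,1\}^{<\mathbb{N}}\to\mathbb{N}$ such that for every $f:\mathbb{N}\to\mathbb{N}$, $\lim_{n\to\infty}G(f(\phi_0),\dots,f(\phi_n))$ equals $1$ if $f\in S$ and $0$ if $f\notin S$. *)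

(* Defs.v *)
From Stdlib Require Import List Fin.

Definition baire := nat -> nat.
Definition bset := baire -> Prop.

Definition compl (S : bset) : bset := fun x => ~ S x.

(* open in the product of discrete topologies *)
Definition bopen (S : bset) : Prop :=
  forall f, S f -> exists n, forall g, (forall i, i < n -> g i = f i) -> S g.

(* SigAux n = boldface Sigma^0_(n+1) *)
Fixpoint SigAux (n : nat) (S : bset) : Prop :=
  match n with
  | 0 => bopen S
  | Datatypes.S n' =>
      exists A : nat -> bset,
        (forall i, SigAux n' (compl (A i))) /\
        (forall x, S x <-> exists i, A i x)
  end.

(* Boldface Sigma^0_n, Pi^0_n, Delta^0_n, for n >= 1 (only used with n >= 1) *)
Definition BSigma (n : nat) (S : bset) : Prop := SigAux (n - 1) S.
Definition BPi (n : nat) (S : bset) : Prop := BSigma n (compl S).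
Definition BDelta (n : nat) (S : bset) : Prop := BSigma n S /\ BPi n S.

Definition DeltaPrime (k : nat) (S : bset) : Prop :=
  match k with
  | 0 | 1 => False
  | 2 => BDelta 2 S
  | _ =>
      (exists A : nat -> nat -> bset,
          (forall i j, BDelta (k - 2) (A i j)) /\
          (forall x, S x <-> exists i, forall j, A i j x)) /\
      (exists B : nat -> nat -> bset,
          (forall i j, BDelta (k - 2) (B i j)) /\
          (forall x, S x <-> forall i, exists j, B i j x))
  end.

(* N^k is represented as Fin.t k -> nat; N^{<N} as list nat. *)
Inductive symbol : Type :=
| SymConst (c : nat)
| SymFun (k : nat) (w : (Fin.t k -> nat) -> nat)
| SymPred (k : nat) (p : (Fin.t k -> nat) -> Prop)
| SymF
| SymG (k : nat) (G : (Fin.t k -> nat) -> list nat -> nat). (* G o f, arity k+1 *)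

Inductive term : Type :=
| TVar (x : nat)
| TConst (c : nat)
| TFun (k : nat) (w : (Fin.t k -> nat) -> nat) (args : Fin.t k -> term)
| TF (t : term)
| TG (k : nat) (G : (Fin.t k -> nat) -> list nat -> nat)
     (args : Fin.t k -> term) (t : term).

Inductive formula : Type :=
| FEq (t1 t2 : term)
| FPred (k : nat) (p : (Fin.t k -> nat) -> Prop) (args : Fin.t k -> term)
| FNot (A : formula)
| FAnd (A B : formula)
| FOr (A B : formula)
| FImp (A B : formula)
| FEx (x : nat) (A : formula)
| FAll (x : nat) (A : formula).

Fixpoint eval (f : baire) (env : nat -> nat) (t : term) : nat :=
  match t with
  | TVar x => env x
  | TConst c => c
  | TFun k w args => w (fun i => eval f env (args i))
  | TF t => f (eval f env t)
  | TG k G args t =>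
      G (fun i => eval f env (args i)) (map f (seq 0 (Datatypes.S (eval f env t))))
  end.

Definition upd (env : nat -> nat) (x v : nat) : nat -> nat :=
  fun y => if Nat.eqb y x then v else env y.

Fixpoint sat (f : baire) (env : nat -> nat) (A : formula) : Prop :=
  match A with
  | FEq t1 t2 => eval f env t1 = eval f env t2
  | FPred k p args => p (fun i => eval f env (args i))
  | FNot A => ~ sat f env A
  | FAnd A B => sat f env A /\ sat f env B
  | FOr A B => sat f env A \/ sat f env B
  | FImp A B => sat f env A -> sat f env B
  | FEx x A => exists v, sat f (upd env x v) A
  | FAll x A => forall v, sat f (upd env x v) A
  end.

(* M_f |= phi, for a sentence phi (the environment is irrelevant) *)
Definition models (f : baire) (A : formula) : Prop := sat f (fun _ => 0) A.

Fixpoint var_in_term (x : nat) (t : term) : Prop :=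
  match t with
  | TVar y => y = x
  | TConst _ => False
  | TFun k w args => exists i, var_in_term x (args i)
  | TF t => var_in_term x t
  | TG k G args t => (exists i, var_in_term x (args i)) \/ var_in_term x t
  end.

Fixpoint free_in (x : nat) (A : formula) : Prop :=
  match A with
  | FEq t1 t2 => var_in_term x t1 \/ var_in_term x t2
  | FPred k p args => exists i, var_in_term x (args i)
  | FNot A => free_in x A
  | FAnd A B | FOr A B | FImp A B => free_in x A \/ free_in x B
  | FEx y A | FAll y A => y <> x /\ free_in x A
  end.

Definition sentence (A : formula) : Prop := forall x, ~ free_in x A.

Fixpoint term_in (Sg : symbol -> Prop) (t : term) : Prop :=
  match t with
  | TVar _ => True
  | TConst c => Sg (SymConst c)
  | TFun k w args => Sg (SymFun k w) /\ forall i, term_in Sg (args i)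
  | TF t => Sg SymF /\ term_in Sg t
  | TG k G args t => Sg (SymG k G) /\ (forall i, term_in Sg (args i)) /\ term_in Sg t
  end.

Fixpoint formula_in (Sg : symbol -> Prop) (A : formula) : Prop :=
  match A with
  | FEq t1 t2 => term_in Sg t1 /\ term_in Sg t2
  | FPred k p args => Sg (SymPred k p) /\ forall i, term_in Sg (args i)
  | FNot A => formula_in Sg A
  | FAnd A B | FOr A B | FImp A B => formula_in Sg A /\ formula_in Sg B
  | FEx _ A | FAll _ A => formula_in Sg A
  end.

Fixpoint qfree (A : formula) : Prop :=
  match A with
  | FEq _ _ | FPred _ _ _ => True
  | FNot A => qfree A
  | FAnd A B | FOr A B | FImp A B => qfree A /\ qfree B
  | FEx _ _ | FAll _ _ => False
  end.

(* Sigma_n and Pi_n, literally as in the paper (one quantifier per level) *)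
Fixpoint SigmaF (n : nat) (A : formula) : Prop :=
  match n with
  | 0 => qfree A
  | Datatypes.S n' =>
      match A with
      | FEx _ B => PiF n' B
      | _ => False
      end
  end
with PiF (n : nat) (A : formula) : Prop :=
  match n with
  | 0 => qfree A
  | Datatypes.S n' =>
      match A with
      | FAll _ B => SigmaF n' B
      | _ => False
      end
  end.

Definition equiv_all (A B : formula) : Prop :=
  forall (f : baire) (env : nat -> nat), sat f env A <-> sat f env B.

Definition DeltaF (n : nat) (A : formula) : Prop :=
  match n with
  | 0 => qfree A
  | Datatypes.S _ =>
      (exists B, SigmaF n B /\ equiv_all A B) /\
      (exists B, PiF n B /\ equiv_all A B)
  end.

Definition countable_symset (Sg : symbol -> Prop) : Prop :=
  exists e : nat -> symbol, forall s, Sg s -> exists n, e n = s.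

Definition nat_limit (u : nat -> nat) (v : nat) : Prop :=
  exists N, forall n, N <= n -> u n = v.

Definition prefix_bits (b : nat -> bool) (n : nat) : list bool :=
  map b (seq 0 (Datatypes.S n)).

Definition guessable (m : nat) (S : bset) : Prop :=
  exists (Sg : symbol -> Prop) (phi : nat -> formula) (G : list bool -> nat),
    countable_symset Sg /\
    (forall n, DeltaF m (phi n) /\ sentence (phi n) /\ formula_in Sg (phi n)) /\
    (forall A, DeltaF m A -> sentence A -> formula_in Sg A ->
               exists n, phi n = A) /\
    (* b i encodes f(phi_i) : true = 1, false = 0 *)
    (forall (f : baire) (b : nat -> bool),
        (forall i, b i = true <-> models f (phi i)) ->
        (S f -> nat_limit (fun n => G (prefix_bits b n)) 1) /\
        (~ S f -> nat_limit (fun n => G (prefix_bits b n)) 0)).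

(* Main.v *)
Require Import Defs.
From Stdlib Require Import List Fin Cantor ClassicalEpsilon Classical FunctionalExtensionality Eqdep_dec Lia PeanoNat.
Import ListNotations.

Fixpoint decV (k : nat) (n : nat) : Fin.t k -> nat :=
  match k with
  | 0 => fun _ => 0
  | Datatypes.S k' => fun i =>
      let p := Cantor.of_nat n in
      Fin.caseS' i (fun _ => nat) (fst p) (decV k' (snd p))
  end.

Lemma fin_collect : forall k (P : Fin.t k -> nat -> nat -> Prop),
  (forall i c d d', d <= d' -> P i c d -> P i c d') ->
  (forall i, exists c d, P i c d) -> exists n d, forall i, P i (decV k n i) d.
Proof.
  induction k as [|k IH]; intros P mono H.
  - exists 0, 0. intros i. apply Fin.case0. exact i.
  - destruct (H Fin.F1) as [c0 [d0 H0]].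
    destruct (IH (fun i => P (Fin.FS i))) as [n' [d' H']].
    + intros; eapply mono; eauto.
    + intros i; apply H.
    + exists (Cantor.to_nat (c0, n')), (Nat.max d0 d').
      intros i. pattern i. apply Fin.caseS'.
      * cbn [decV]. rewrite Cantor.cancel_of_to. simpl. eapply mono; [|exact H0]. lia.
      * intros p. cbn [decV]. rewrite Cantor.cancel_of_to. simpl. eapply mono; [|exact (H' p)]. lia.
Qed.

Section Enum.
Variable Gg : forall k, (Fin.t k -> nat) -> list nat -> nat.

Definition SgOf (s : symbol) : Prop :=
  (exists c, s = SymConst c) \/ (exists k, s = SymG k (Gg k)).

Fixpoint decT (d n : nat) : term :=
  match d with
  | 0 => TConst 0
  | Datatypes.S d' =>
      match Cantor.of_nat n with
      | (0, c) => TVar c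
      | (1, c) => TConst c
      | (_, r) =>
          let p := Cantor.of_nat r in
          let q := Cantor.of_nat (snd p) in
          TG (fst p) (Gg (fst p)) (fun i => decT d' (decV (fst p) (fst q) i)) (decT d' (snd q))
      end
  end.

Lemma decT_surj : forall t, term_in SgOf t -> exists c d, forall d', d <= d' -> decT d' c = t.
Proof.
  induction t as [x|c|k w args IH|t IH|k G args IH t IHt]; simpl; intros Ht.
  - exists (Cantor.to_nat (0, x)), 1. intros [|d'] Hd; [lia|]. cbn [decT]. rewrite Cantor.cancel_of_to. reflexivity.
  - exists (Cantor.to_nat (1, c)), 1. intros [|d'] Hd; [lia|]. cbn [decT]. rewrite Cantor.cancel_of_to. reflexivity.
  - destruct Ht as [[[c' E]|[k' E]] _]; discriminate.
  - destruct Ht as [[[c' E]|[k' E]] _]; discriminate.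
  - destruct Ht as [Hs [Ha Htt]].
    assert (EG : G = Gg k).
    { destruct Hs as [[c' E]|[k' E]]; [discriminate|]. injection E. intros E2 E1. subst k'.
      apply inj_pair2_eq_dec in E2; [exact E2| exact Nat.eq_dec]. }
    subst G.
    destruct (fin_collect k (fun i c d => forall d', d <= d' -> decT d' c = args i)) as [nv [da Hda]].
    + intros i c d d' Hle Hp d'' Hd''. apply Hp. lia.
    + intros i. apply IH. apply Ha.
    + destruct (IHt Htt) as [ct [dt Hdt]].
      exists (Cantor.to_nat (2, Cantor.to_nat (k, Cantor.to_nat (nv, ct)))), (Datatypes.S (Nat.max da dt)).
      intros [|d'] Hd; [lia|]. cbn [decT]. repeat (rewrite Cantor.cancel_of_to; cbn [fst snd]).

      rewrite (Hdt d') by lia. f_equal. apply functional_extensionality. intros i. apply Hda. lia.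
Qed.

Fixpoint decF (d n : nat) : formula :=
  match d with
  | 0 => FEq (TConst 0) (TConst 0)
  | Datatypes.S d' =>
      let p := Cantor.of_nat n in
      let q := Cantor.of_nat (snd p) in
      match fst p with
      | 0 => FEq (decT d' (fst q)) (decT d' (snd q))
      | 1 => FNot (decF d' (snd p))
      | 2 => FAnd (decF d' (fst q)) (decF d' (snd q))
      | 3 => FOr (decF d' (fst q)) (decF d' (snd q))
      | 4 => FImp (decF d' (fst q)) (decF d' (snd q))
      | 5 => FEx (fst q) (decF d' (snd q))
      | _ => FAll (fst q) (decF d' (snd q))
      end
  end.

Lemma decF_surj : forall A, formula_in SgOf A -> exists c d, forall d', d <= d' -> decF d' c = A.
Proof.
  induction A as [t1 t2|k p args|A IH|A IHA B IHB|A IHA B IHB|A IHA B IHB|x A IH|x A IH];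
    simpl; intros HA.
  - destruct HA as [H1 H2]. destruct (decT_surj t1 H1) as [c1 [d1 E1]].
    destruct (decT_surj t2 H2) as [c2 [d2 E2]].
    exists (Cantor.to_nat (0, Cantor.to_nat (c1, c2))), (Datatypes.S (Nat.max d1 d2)).
    intros [|d'] Hd; [lia|]. cbn [decF]. repeat (rewrite Cantor.cancel_of_to; cbn [fst snd]).
    rewrite E1, E2 by lia. reflexivity.
  - destruct HA as [[[c' E]|[k' E]] _]; discriminate.
  - destruct (IH HA) as [c [d E]].
    exists (Cantor.to_nat (1, c)), (Datatypes.S d).
    intros [|d'] Hd; [lia|]. cbn [decF]. repeat (rewrite Cantor.cancel_of_to; cbn [fst snd]). rewrite E by lia. reflexivity.
  - destruct HA as [H1 H2]. destruct (IHA H1) as [c1 [d1 E1]]. destruct (IHB H2) as [c2 [d2 E2]].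
    exists (Cantor.to_nat (2, Cantor.to_nat (c1, c2))), (Datatypes.S (Nat.max d1 d2)).
    intros [|d'] Hd; [lia|]. cbn [decF]. repeat (rewrite Cantor.cancel_of_to; cbn [fst snd]).
    rewrite E1, E2 by lia. reflexivity.
  - destruct HA as [H1 H2]. destruct (IHA H1) as [c1 [d1 E1]]. destruct (IHB H2) as [c2 [d2 E2]].
    exists (Cantor.to_nat (3, Cantor.to_nat (c1, c2))), (Datatypes.S (Nat.max d1 d2)).
    intros [|d'] Hd; [lia|]. cbn [decF]. repeat (rewrite Cantor.cancel_of_to; cbn [fst snd]).
    rewrite E1, E2 by lia. reflexivity.
  - destruct HA as [H1 H2]. destruct (IHA H1) as [c1 [d1 E1]]. destruct (IHB H2) as [c2 [d2 E2]].
    exists (Cantor.to_nat (4, Cantor.to_nat (c1, c2))), (Datatypes.S (Nat.max d1 d2)).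
    intros [|d'] Hd; [lia|]. cbn [decF]. repeat (rewrite Cantor.cancel_of_to; cbn [fst snd]).
    rewrite E1, E2 by lia. reflexivity.
  - destruct (IH HA) as [c [d E]].
    exists (Cantor.to_nat (5, Cantor.to_nat (x, c))), (Datatypes.S d).
    intros [|d'] Hd; [lia|]. cbn [decF]. repeat (rewrite Cantor.cancel_of_to; cbn [fst snd]). rewrite E by lia. reflexivity.
  - destruct (IH HA) as [c [d E]].
    exists (Cantor.to_nat (6, Cantor.to_nat (x, c))), (Datatypes.S d).
    intros [|d'] Hd; [lia|]. cbn [decF]. repeat (rewrite Cantor.cancel_of_to; cbn [fst snd]). rewrite E by lia. reflexivity.
Qed.

Definition enumF (n : nat) : formula :=
  let p := Cantor.of_nat n in decF (fst p) (snd p).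

Lemma enumF_surj : forall A, formula_in SgOf A -> exists n, enumF n = A.
Proof.
  intros A HA. destruct (decF_surj A HA) as [c [d E]].
  exists (Cantor.to_nat (d, c)). unfold enumF. rewrite Cantor.cancel_of_to. simpl. apply E. lia.
Qed.

Lemma SgOf_countable : countable_symset SgOf.
Proof.
  exists (fun n => let p := Cantor.of_nat n in
            match fst p with 0 => SymConst (snd p) | _ => SymG (snd p) (Gg (snd p)) end).
  intros s [[c E]|[k E]]; subst.
  - exists (Cantor.to_nat (0, c)). rewrite Cantor.cancel_of_to. reflexivity.
  - exists (Cantor.to_nat (1, k)). rewrite Cantor.cancel_of_to. reflexivity.
Qed.
End Enum.

Definition cyl (l : list nat) (X : bset) : Prop :=
  forall g, (forall i, i < length l -> g i = nth i l 0) -> X g.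

Fixpoint Rep (H : list nat -> list nat -> nat) (n : nat) (F : list nat -> bset) : Prop :=
  match n with
  | 0 => (forall ctx, bopen (F ctx)) /\ (forall ctx l, H ctx l = 1 <-> cyl l (F ctx))
  | Datatypes.S n' => exists A : list nat -> nat -> bset,
      (forall ctx x, F ctx x <-> exists i, A ctx i x) /\
      Rep H n' (fun ctx => compl (A (tl ctx) (hd 0 ctx)))
  end.

Lemma exRep : forall n F, (forall ctx, SigAux n (F ctx)) -> exists H, Rep H n F.
Proof.
  induction n as [|n IH]; intros F HF; simpl in *.
  - exists (fun ctx l => if excluded_middle_informative (cyl l (F ctx)) then 1 else 0).
    split; [exact HF|]. intros ctx l.
    destruct (excluded_middle_informative (cyl l (F ctx))); split; intros; auto; try discriminate; contradiction.
  - set (Af := fun ctx => proj1_sig (constructive_indefinite_description _ (HF ctx))).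
    assert (HA : forall ctx, (forall i, SigAux n (compl (Af ctx i))) /\ (forall x, F ctx x <-> exists i, Af ctx i x)).
    { intros ctx. unfold Af. destruct (constructive_indefinite_description _ (HF ctx)) as [A HA]. exact HA. }
    destruct (IH (fun ctx => compl (Af (tl ctx) (hd 0 ctx)))) as [H HH].
    + intros ctx. apply HA.
    + exists H, Af. split; [|exact HH]. intros ctx x. apply HA.
Qed.

Fixpoint vec_to_list (k : nat) : (Fin.t k -> nat) -> list nat :=
  match k with
  | 0 => fun _ => []
  | Datatypes.S k' => fun v => v Fin.F1 :: vec_to_list k' (fun i => v (Fin.FS i))
  end.

Definition GgOf (H : list nat -> list nat -> nat) (k : nat) (v : Fin.t k -> nat) (l : list nat) : nat :=
  H (vec_to_list k v) l.

Definition argsOf (l : list term) : Fin.t (length l) -> term :=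
  fun i => nth (proj1_sig (Fin.to_nat i)) l (TConst 0).

Lemma vtl_nat : forall k (g : nat -> nat),
  vec_to_list k (fun i => g (proj1_sig (Fin.to_nat i))) = map g (seq 0 k).
Proof.
  induction k as [|k IH]; intros g; [reflexivity|].
  simpl. f_equal.
  rewrite <- seq_shift, map_map.
  rewrite <- (IH (fun n => g (Datatypes.S n))). f_equal.
  apply functional_extensionality. intros i. simpl. destruct (Fin.to_nat i). reflexivity.
Qed.

Lemma map_nth_seq : forall (A B : Type) (h : A -> B) (l : list A) d,
  map (fun n => h (nth n l d)) (seq 0 (length l)) = map h l.
Proof.
  intros A B h l d. induction l as [|a l IH]; [reflexivity|].
  simpl. f_equal. rewrite <- seq_shift, map_map. exact IH.
Qed.

Lemma eval_argsOf : forall f env l,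
  vec_to_list (length l) (fun i => eval f env (argsOf l i)) = map (eval f env) l.
Proof.
  intros f env l. unfold argsOf.
  rewrite (vtl_nat (length l) (fun n => eval f env (nth n l (TConst 0)))).
  apply map_nth_seq.
Qed.

Definition ctxT (d : nat) (pre : list nat) : list term :=
  rev (map TVar (seq 0 d)) ++ map TConst pre.

Definition ctxv (env : nat -> nat) (d : nat) (pre : list nat) : list nat :=
  rev (map env (seq 0 d)) ++ pre.

Lemma eval_ctxT : forall f env d pre, map (eval f env) (ctxT d pre) = ctxv env d pre.
Proof.
  intros. unfold ctxT, ctxv. rewrite map_app, map_rev, !map_map. simpl.
  rewrite map_id. reflexivity.
Qed.

Lemma ctxv_upd : forall env d v pre, ctxv (upd env d v) d pre = ctxv env d pre.
Proof.
  intros. unfold ctxv. f_equal. f_equal. apply map_ext_in. intros x Hx.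
  apply in_seq in Hx. unfold upd. destruct (Nat.eqb_spec x d); [lia|reflexivity].
Qed.

Lemma ctxv_upd_S : forall env d v pre, ctxv (upd env d v) (Datatypes.S d) pre = v :: ctxv env d pre.
Proof.
  intros. rewrite <- (ctxv_upd env d v pre). unfold ctxv.
  rewrite seq_S, map_app, rev_app_distr. simpl. unfold upd at 1. rewrite Nat.eqb_refl. reflexivity.
Qed.

Definition atom (H : list nat -> list nat -> nat) (d : nat) (pre : list nat) : formula :=
  FEq (TG (length (ctxT d pre)) (GgOf H (length (ctxT d pre))) (argsOf (ctxT d pre)) (TVar d)) (TConst 1).

Fixpoint sigF (H : list nat -> list nat -> nat) (n d : nat) (pre : list nat) {struct n} : formula :=
  match n with
  | 0 => FEx d (atom H d pre)
  | Datatypes.S n' => FEx d (piF H n' (Datatypes.S d) pre)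
  end
with piF (H : list nat -> list nat -> nat) (n d : nat) (pre : list nat) {struct n} : formula :=
  match n with
  | 0 => FAll d (FNot (atom H d pre))
  | Datatypes.S n' => FAll d (sigF H n' (Datatypes.S d) pre)
  end.

Lemma sigpi_class : forall H n d pre,
  SigmaF (Datatypes.S n) (sigF H n d pre) /\ PiF (Datatypes.S n) (piF H n d pre).
Proof.
  intros H n. induction n as [|n IH]; intros d pre; simpl.
  - split; exact I.
  - split; apply IH.
Qed.

Lemma pref_nth : forall (f : baire) k i, i < k -> nth i (map f (seq 0 k)) 0 = f i.
Proof.
  intros f k i Hi. rewrite nth_indep with (d' := f 0) by (rewrite length_map, length_seq; lia).
  rewrite map_nth, seq_nth by lia. reflexivity.
Qed.

Lemma cyl_pref : forall (f : baire) k X,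
  cyl (map f (seq 0 k)) X <-> (forall g, (forall i, i < k -> g i = f i) -> X g).
Proof.
  intros f k X. unfold cyl. rewrite length_map, length_seq. split; intros Hc g Hg; apply Hc;
  intros i Hi; rewrite (Hg i Hi); rewrite pref_nth; auto.
Qed.

Lemma atom_sem : forall H d pre f env v,
  sat f (upd env d v) (atom H d pre) <-> H (ctxv env d pre) (map f (seq 0 (Datatypes.S v))) = 1.
Proof.
  intros. unfold atom. simpl. unfold GgOf. rewrite eval_argsOf, eval_ctxT, ctxv_upd.
  unfold upd. rewrite Nat.eqb_refl. reflexivity.
Qed.

Lemma sigpi_sem : forall n H F, Rep H n F -> forall d pre f env,
  (sat f env (sigF H n d pre) <-> F (ctxv env d pre) f) /\
  (sat f env (piF H n d pre) <-> ~ F (ctxv env d pre) f).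
Proof.
  induction n as [|n IH]; intros H F HR d pre f env.
  - destruct HR as [Hop HH].
    assert (E : (exists v, sat f (upd env d v) (atom H d pre)) <-> F (ctxv env d pre) f).
    { split.
      - intros [v Hv]. apply atom_sem in Hv. apply HH in Hv. apply (proj1 (cyl_pref f (Datatypes.S v) _) Hv f). auto.
      - intros Hf. destruct (Hop _ f Hf) as [N HN]. exists N. apply atom_sem. apply HH.
        apply (proj2 (cyl_pref f (Datatypes.S N) _)). intros g Hg. apply HN. intros i Hi. apply Hg. lia. }
    simpl. split; [exact E|]. split.
    + intros Hall Hf. apply E in Hf. destruct Hf as [v Hv]. exact (Hall v Hv).
    + intros Hn v Hv. apply Hn, E. exists v. exact Hv.
  - destruct HR as [A [HA HR]].
    simpl. split.
    + rewrite HA. split; intros [v Hv]; exists v.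
      * apply (proj2 (IH H _ HR (Datatypes.S d) pre f (upd env d v))) in Hv.
        rewrite ctxv_upd_S in Hv. simpl in Hv. unfold compl in Hv. apply NNPP. exact Hv.
      * apply (proj2 (IH H _ HR (Datatypes.S d) pre f (upd env d v))).
        rewrite ctxv_upd_S. simpl. unfold compl. auto.
    + rewrite HA. split.
      * intros Hall [v Hv]. specialize (Hall v).
        apply (proj1 (IH H _ HR (Datatypes.S d) pre f (upd env d v))) in Hall.
        rewrite ctxv_upd_S in Hall. exact (Hall Hv).
      * intros Hn v. apply (proj1 (IH H _ HR (Datatypes.S d) pre f (upd env d v))).
        rewrite ctxv_upd_S. simpl. unfold compl. intros Hv. apply Hn. exists v. exact Hv.
Qed.

Lemma in_ctxT : forall t d pre, In t (ctxT d pre) ->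
  (exists y, y < d /\ t = TVar y) \/ (exists c, t = TConst c).
Proof.
  intros t d pre Hin. unfold ctxT in Hin. apply in_app_or in Hin. destruct Hin as [Hin|Hin].
  - left. apply in_rev in Hin. apply in_map_iff in Hin. destruct Hin as [y [E Hy]].
    apply in_seq in Hy. exists y. split; [lia|auto].
  - right. apply in_map_iff in Hin. destruct Hin as [c [E _]]. exists c. auto.
Qed.

Lemma argsOf_cases : forall d pre i,
  (exists y, y < d /\ argsOf (ctxT d pre) i = TVar y) \/ (exists c, argsOf (ctxT d pre) i = TConst c).
Proof.
  intros d pre i. unfold argsOf.
  destruct (nth_in_or_default (proj1_sig (Fin.to_nat i)) (ctxT d pre) (TConst 0)) as [Hin|E].
  - exact (in_ctxT _ d pre Hin).
  - right. exists 0. exact E.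
Qed.

Lemma atom_free : forall H d pre x, free_in x (atom H d pre) -> x <= d.
Proof.
  intros H d pre x Hx. unfold atom in Hx. cbn [free_in var_in_term] in Hx.
  destruct Hx as [[[i Hi]|Hi]|[]].
  - destruct (argsOf_cases d pre i) as [[y [Hy E]]|[c E]]; rewrite E in Hi; simpl in Hi; lia.
  - lia.
Qed.

Lemma sigpi_free : forall H n d pre x,
  (free_in x (sigF H n d pre) -> x < d) /\ (free_in x (piF H n d pre) -> x < d).
Proof.
  intros H n. induction n as [|n IH]; intros d pre x; cbn [sigF piF free_in].
  - split; intros [Hne Hf]; apply atom_free in Hf; lia.
  - split; intros [Hne Hf].
    + apply (proj2 (IH (Datatypes.S d) pre x)) in Hf. lia.
    + apply (proj1 (IH (Datatypes.S d) pre x)) in Hf. lia.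
Qed.

Lemma atom_in : forall H d pre, formula_in (SgOf (GgOf H)) (atom H d pre).
Proof.
  intros H d pre. unfold atom. simpl. split.
  - split; [right; eexists; reflexivity|]. split; [|exact I].
    intros i. destruct (argsOf_cases d pre i) as [[y [Hy E]]|[c E]]; rewrite E; simpl; auto.
    left. exists c. reflexivity.
  - left. exists 1. reflexivity.
Qed.

Lemma sigpi_in : forall H n d pre,
  formula_in (SgOf (GgOf H)) (sigF H n d pre) /\ formula_in (SgOf (GgOf H)) (piF H n d pre).
Proof.
  intros H n. induction n as [|n IH]; intros d pre; simpl.
  - split; [|]; apply atom_in.
  - split; apply IH.
Qed.

Fixpoint find_first (p : nat -> bool) (l : list nat) : option nat :=
  match l with
  | [] => None
  | c :: r => if p c then Some c else find_first p r
  end.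

Lemma find_first_spec : forall p cs L a, a <= cs < a + L ->
  (forall c, a <= c < cs -> p c = false) -> p cs = true ->
  find_first p (seq a L) = Some cs.
Proof.
  intros p cs L. induction L as [|L IH]; intros a Ha Hlt Hcs; [lia|].
  simpl. destruct (Nat.eq_dec a cs) as [->|Hne]; [rewrite Hcs; reflexivity|].
  rewrite Hlt by lia. apply IH; [lia| |exact Hcs]. intros c Hc. apply Hlt. lia.
Qed.

Lemma least_ex : forall P : nat -> Prop, (exists n, P n) -> exists n, P n /\ forall m, m < n -> ~ P m.
Proof.
  intros P [n Hn]. induction n as [n IH] using (well_founded_induction Wf_nat.lt_wf).
  destruct (classic (exists m, m < n /\ P m)) as [[m [Hm Pm]]|Hno].
  - exact (IH m Hm Pm).
  - exists n. split; [exact Hn|]. intros m Hm Pm. apply Hno. eauto.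
Qed.

Lemma bound_collect : forall K (Q : nat -> nat -> Prop),
  (forall c x y, x <= y -> Q c x -> Q c y) ->
  (forall c, c < K -> exists x, Q c x) -> exists N, forall c, c < K -> Q c N.
Proof.
  induction K as [|K IH]; intros Q mono H.
  - exists 0. intros; lia.
  - destruct (IH Q mono) as [N HN]. { intros c Hc. apply H. lia. }
    destruct (H K) as [x Hx]; [lia|].
    exists (Nat.max N x). intros c Hc.
    destruct (Nat.eq_dec c K) as [->|Hne].
    + eapply mono; [|exact Hx]. lia.
    + eapply mono; [|apply HN; lia]. lia.
Qed.

Lemma prefix_nth_error : forall (b : nat -> bool) n k, k <= n ->
  nth_error (prefix_bits b n) k = Some (b k).
Proof.
  intros b n k Hk. unfold prefix_bits. rewrite nth_error_map, nth_error_seq.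
  destruct (Nat.ltb_spec k (Datatypes.S n)); [reflexivity|lia].
Qed.

Lemma length_prefix : forall b n, length (prefix_bits b n) = Datatypes.S n.
Proof. intros. unfold prefix_bits. rewrite length_map, length_seq. reflexivity. Qed.

Definition Good (m : nat) (Sg : symbol -> Prop) (A : formula) : Prop :=
  DeltaF m A /\ sentence A /\ formula_in Sg A.

Lemma core (m : nat) (S : bset) (Sg : symbol -> Prop)
  (th : nat -> nat -> nat -> formula) (C : nat -> nat -> nat -> bset) :
  countable_symset Sg ->
  (exists enum : nat -> formula, forall A, formula_in Sg A -> exists n, enum n = A) ->
  (forall s i j, Good m Sg (th s i j)) ->
  (forall s i j f, models f (th s i j) <-> C s i j f) ->
  (forall f, S f <-> exists i, forall j, C 0 i j f) ->
  (forall f, ~ S f <-> exists i, forall j, C 1 i j f) ->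
  guessable m S.
Proof.
  intros Hcount [enum Henum] Hth HC HS HnS.
  set (phi := fun n => if excluded_middle_informative (Good m Sg (enum n)) then enum n else th 0 0 0).
  assert (Hphi : forall n, Good m Sg (phi n)).
  { intros n. unfold phi. destruct (excluded_middle_informative _); auto. }
  assert (Hsurj : forall A, Good m Sg A -> exists n, phi n = A).
  { intros A HA. destruct (Henum A (proj2 (proj2 HA))) as [n En]. exists n. unfold phi.
    destruct (excluded_middle_informative _) as [_|Hn]; [exact En|]. subst. contradiction. }
  assert (Hidx : forall s i j, exists n, phi n = th s i j) by (intros; apply Hsurj, Hth).
  set (idx := fun s i j => proj1_sig (constructive_indefinite_description _ (Hidx s i j))).
  assert (Eidx : forall s i j, phi (idx s i j) = th s i j).
  { intros. unfold idx. destruct (constructive_indefinite_description _ _). exact e. }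
  set (refuted := fun (l : list bool) c =>
         existsb (fun j => match nth_error l (idx (c mod 2) (c / 2) j) with
                           | Some false => true | _ => false end) (seq 0 (length l))).
  set (G := fun l => match find_first (fun c => negb (refuted l c)) (seq 0 (length l)) with
                     | Some c => if c mod 2 =? 0 then 1 else 0
                     | None => 0 end).
  exists Sg, phi, G. split; [exact Hcount|]. split.
  { intros n. apply Hphi. }
  split.
  { intros A H1 H2 H3. apply Hsurj. split; auto. }
  intros f b Hb.
  assert (Hbit : forall s i j, b (idx s i j) = true <-> C s i j f).
  { intros. rewrite Hb, Eidx. apply HC. }
  set (T := fun c => forall j, C (c mod 2) (c / 2) j f).
  assert (Hmod : forall c, c mod 2 = 0 \/ c mod 2 = 1).
  { intros c. pose proof (Nat.mod_upper_bound c 2). lia. }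
  assert (Hexist : exists c, T c).
  { destruct (classic (S f)) as [Hs|Hs].
    - apply HS in Hs. destruct Hs as [i Hi]. exists (2 * i). unfold T.
      replace ((2 * i) mod 2) with 0. replace ((2 * i) / 2) with i. exact Hi.
      + rewrite Nat.mul_comm, Nat.div_mul; lia.
      + rewrite Nat.mul_comm, Nat.Div0.mod_mul; lia.
    - apply HnS in Hs. destruct Hs as [i Hi]. exists (2 * i + 1). unfold T.
      replace ((2 * i + 1) mod 2) with 1. replace ((2 * i + 1) / 2) with i. exact Hi.
      + rewrite Nat.add_comm, Nat.mul_comm, Nat.div_add by lia. reflexivity.
      + rewrite Nat.add_comm, Nat.mul_comm, Nat.Div0.mod_add. reflexivity. }
  destruct (least_ex T Hexist) as [cs [Tcs Hmin]].
  destruct (bound_collect cs (fun c x => exists j, j <= x /\ idx (c mod 2) (c / 2) j <= x /\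
                                           ~ C (c mod 2) (c / 2) j f)) as [N HN].
  { intros c x y Hxy [j [H1 [H2 H3]]]. exists j. repeat split; auto; lia. }
  { intros c Hc. apply Hmin in Hc. unfold T in Hc. apply not_all_ex_not in Hc.
    destruct Hc as [j Hj]. exists (Nat.max j (idx (c mod 2) (c / 2) j)), j. repeat split; auto; lia. }
  assert (Hlim : forall n, Nat.max N cs <= n -> G (prefix_bits b n) = if cs mod 2 =? 0 then 1 else 0).
  { intros n Hn. unfold G. rewrite length_prefix.
    rewrite (find_first_spec _ cs); [reflexivity|lia| |].
    - intros c Hc. apply Bool.negb_false_iff. unfold refuted. apply existsb_exists.
      destruct (HN c (proj2 Hc)) as [j [Hj1 [Hj2 Hj3]]].
      exists j. split.
      + rewrite length_prefix. apply in_seq. lia.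
      + rewrite prefix_nth_error by lia.
        destruct (b (idx (c mod 2) (c / 2) j)) eqn:Eb; [|reflexivity].
        exfalso. apply Hj3. apply Hbit. exact Eb.
    - apply Bool.negb_true_iff. unfold refuted.
      destruct (existsb _ _) eqn:E; [|reflexivity].
      apply existsb_exists in E. destruct E as [j [_ Hj]].
      set (k := idx (cs mod 2) (cs / 2) j) in *.
      destruct (Nat.le_gt_cases k n) as [Hk|Hk].
      + rewrite prefix_nth_error in Hj by exact Hk.
        assert (Hbk : b k = true) by (apply Hbit; apply Tcs).
        rewrite Hbk in Hj. discriminate.
      + assert (E0 : nth_error (prefix_bits b n) k = None)
          by (apply nth_error_None; rewrite length_prefix; lia).
        rewrite E0 in Hj. discriminate. }
  split.
  - intros Hs. exists (Nat.max N cs). intros n Hn. rewrite Hlim by exact Hn.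
    destruct (Hmod cs) as [E|E]; rewrite E; [reflexivity|].
    exfalso. apply HnS in Hs; [exact Hs|]. exists (cs / 2). intros j. specialize (Tcs j). rewrite E in Tcs. exact Tcs.
  - intros Hs. exists (Nat.max N cs). intros n Hn. rewrite Hlim by exact Hn.
    destruct (Hmod cs) as [E|E]; rewrite E; [|reflexivity].
    exfalso. apply Hs. apply HS. exists (cs / 2). intros j. specialize (Tcs j). rewrite E in Tcs. exact Tcs.
Qed.

Lemma sig_ext : forall n (X Y : bset), (forall x, X x <-> Y x) -> SigAux n X -> SigAux n Y.
Proof.
  intros [|n] X Y E H; simpl in *.
  - intros f Hf. apply E in Hf. destruct (H f Hf) as [N HN]. exists N. intros g Hg. apply E, HN, Hg.
  - destruct H as [A [HA HX]]. exists A. split; [exact HA|]. intros x. rewrite <- E. apply HX.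
Qed.

Lemma BDelta_S : forall m X, BDelta (Datatypes.S m) X -> SigAux m X /\ SigAux m (compl X).
Proof.
  intros m X. unfold BDelta, BPi, BSigma. replace (Datatypes.S m - 1) with m by lia. auto.
Qed.

Definition Dm (X : bset) (l : list nat) : Prop :=
  exists g, X g /\ (forall k, k < length l -> g k = nth k l 0).

Lemma closed_D : forall X f, bopen (compl X) ->
  (X f <-> forall N, Dm X (map f (seq 0 (Datatypes.S N)))).
Proof.
  intros X f Hop. split.
  - intros Hf N. exists f. split; [exact Hf|]. intros k Hk.
    rewrite length_map, length_seq in Hk. rewrite pref_nth; auto.
  - intros HD. apply NNPP. intros Hn. destruct (Hop f Hn) as [N HN].
    destruct (HD N) as [g [Hg Hag]]. apply (HN g); [|exact Hg].
    intros i Hi. rewrite Hag by (rewrite length_map, length_seq; lia). apply pref_nth. lia.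
Qed.

Theorem mainTheorem10 (m : nat) (S : bset) :
  DeltaPrime (m + 2) S -> guessable m S.
Proof.
  intros HD. rewrite Nat.add_comm in HD. destruct m as [|m'].
  -
    destruct HD as [HS1 HS2]. unfold BPi, BSigma in *. simpl in HS1, HS2.
    destruct HS1 as [A [HA HSA]]. destruct HS2 as [A' [HA' HSA']].
    set (Cq := fun s i => if s =? 0 then A i else A' i).
    set (H2 := fun ctx l => if excluded_middle_informative (Dm (Cq (nth 0 ctx 0) (nth 1 ctx 0)) l) then 1 else 0).
    set (Gg := GgOf H2).
    set (th := fun s i N => FEq (TG 2 (Gg 2) (argsOf [TConst s; TConst i]) (TConst N)) (TConst 1)).
    apply (core 0 S (SgOf Gg) th (fun s i N f => Dm (Cq s i) (map f (seq 0 (Datatypes.S N))))).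
    + apply SgOf_countable.
    + exists (enumF Gg). apply enumF_surj.
    + intros s i j. unfold Good, th. split; [|split].
      * simpl. auto.
      * intros x Hx. cbn [free_in var_in_term] in Hx.
        destruct Hx as [[[k Hk]|[]]|[]].
        assert (Lem : forall n, ~ var_in_term x (nth n [TConst s; TConst i] (TConst 0)))
          by (intros [|[|[|?]]] Hv; simpl in Hv; exact Hv).
        exact (Lem _ Hk).
      * cbn [formula_in term_in]. split; [split; [right; exists 2; reflexivity|split]|].
        -- intros k.
           assert (Lem : forall n, term_in (SgOf Gg) (nth n [TConst s; TConst i] (TConst 0)))
             by (intros [|[|[|?]]]; simpl; left; eexists; reflexivity).
           exact (Lem _).
        -- left; eexists; reflexivity.
        -- left; eexists; reflexivity.
    + intros s i N f. unfold models, th. cbn [sat eval]. unfold Gg, GgOf.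
      unfold H2. simpl.
      destruct (excluded_middle_informative _) as [h|h]; split; intros; auto; try discriminate; contradiction.
    + intros f. rewrite HSA. split; intros [i Hi]; exists i.
      * apply closed_D; [apply HA|exact Hi].
      * apply (closed_D _ _ (HA i)). exact Hi.
    + intros f. change (~ S f) with (compl S f). rewrite HSA'. split; intros [i Hi]; exists i.
      * apply closed_D; [apply HA'|exact Hi].
      * apply (closed_D _ _ (HA' i)). exact Hi.
  -
    destruct HD as [[A [HA HSA]] [B [HB HSB]]].
    set (Ctop := fun s i j => if s =? 0 then A i j else compl (B i j)).
    assert (HC1 : forall s i j, SigAux m' (Ctop s i j) /\ SigAux m' (compl (Ctop s i j))).
    { intros s i j. unfold Ctop. destruct (s =? 0).
      - apply BDelta_S. apply HA.
      - destruct (BDelta_S _ _ (HB i j)) as [H1 H2]. split; [exact H2|].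
        apply (sig_ext _ (B i j)); [|exact H1]. intros x. unfold compl. split; [auto|apply NNPP]. }
    set (Ftop := fun ctx => Ctop (nth 2 ctx 0) (nth 1 ctx 0) (nth 0 ctx 0)).
    destruct (exRep m' Ftop) as [H HR]. { intros ctx. apply HC1. }
    destruct (exRep m' (fun ctx => compl (Ftop ctx))) as [H' HR']. { intros ctx. apply HC1. }
    set (th := fun s i j => sigF H m' 0 [j; i; s]).
    assert (Hsem : forall s i j f env, sat f env (th s i j) <-> Ctop s i j f).
    { intros s i j f env. unfold th. rewrite (proj1 (sigpi_sem m' H Ftop HR 0 [j;i;s] f env)).
      reflexivity. }
    apply (core (Datatypes.S m') S (SgOf (GgOf H)) th Ctop).
    + apply SgOf_countable.
    + exists (enumF (GgOf H)). apply enumF_surj.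
    + intros s i j. unfold Good. split; [|split].
      * split.
        -- exists (th s i j). split; [apply sigpi_class|]. intros f env. reflexivity.
        -- exists (piF H' m' 0 [j;i;s]). split; [apply sigpi_class|]. intros f env.
           rewrite Hsem, (proj2 (sigpi_sem m' H' _ HR' 0 [j;i;s] f env)).
           simpl. unfold Ftop, compl. simpl. split; [auto|apply NNPP].
      * intros x Hx. apply (proj1 (sigpi_free H m' 0 [j;i;s] x)) in Hx. lia.
      * apply sigpi_in.
    + intros s i j f. unfold models. apply Hsem.
    + intros f. rewrite HSA. reflexivity.
    + intros f. rewrite HSB. split.
      * intros Hn. apply not_all_ex_not in Hn. destruct Hn as [i Hi]. exists i. intros j Hj.
        apply Hi. exists j. exact Hj.
      * intros [i Hi] Hall. destruct (Hall i) as [j Hj]. exact (Hi j Hj).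
Qed.
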